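(* Let $f$ be a firm and let $\widehat{Ch}_f:[0,1]^W\to[0,1]^W$ be the function defined below. Then $\widehat{Ch}_f$ is continuous and satisfies the revealed preference property: for any $\mathbf x,\mathbf x'\in[0,1]^W$ with $\mathbf x'\le\mathbf x$, if $\widehat{Ch}_f(\mathbf x)\le\mathbf x'$ then $\widehat{Ch}_f(\mathbf x')=\widehat{Ch}_f(\mathbf x)$.
   Context: $W=\{w_1,\dots,w_n\}$ is a finite set, and firm $f$ has a strict, complete, transitive preference $\succ_f$ over $2^W$; subsets of $W$ are identified with their indicator vectors in $\{0,1\}^W$. Let $\mathbf u^1\succ_f\mathbf u^2\succ_f\cdots\succ_f\mathbf u^L\succ_f\mathbf 0$ be all sets $S$ with $S\succ_f\emptyset$, listed in preference order. For $\mathbf x\in[0,1]^W$ define recursively $t_0=0$, $\mathbf z^0=\mathbf x$, and for $k=1,\dots,L$: $t_k=\min\{1-\sum_{j=0}^{k-1}t_j,\ z^{k-1}_i : i\in\{1,\dots,n\},\ u^k_i\neq0\}$ and $\mathbf z^k=\mathbf z^{k-1}-t_k\mathbf u^k$. Then $\widehat{Ch}_f(\mathbf x)=\sum_{k=1}^L t_k\mathbf u^k$. Vector inequalities are componentwise. *)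

(* Defs.v *)
From HB Require Import structures.
From mathcomp Require Import all_boot all_order all_algebra.
From mathcomp Require Import all_classical all_reals all_analysis.
Set Implicit Arguments. Unset Strict Implicit. Unset Printing Implicit Defensive.
Import Order.TTheory GRing.Theory Num.Theory.
Local Open Scope ring_scope.

(* The firm's preference over 2^W : [pref A B] means A \succ_f B. *)
Definition strict_pref (W : finType) (pref : rel {set W}) : Prop :=
  [/\ irreflexive pref, transitive pref &
      forall A B : {set W}, A != B -> pref A B || pref B A].

(* u^1, ..., u^L : all sets strictly preferred to the empty set, listed in
   decreasing preference order (most preferred first). *)
Definition acceptable_sets (W : finType) (pref : rel {set W}) : seq {set W} :=
  sort (fun A B => (A == B) || pref A B)
       [seq S <- enum {set W} | pref S (finset.set0 : {set W})].

Definition ind (R : realType) (W : finType) (u : {set W}) : W -> R :=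
  fun i => (i \in u)%:R.

(* One step of the recursion: state = (sum_{j<k} t_j, z^{k-1}, sum_{j<k} t_j u^j).
   t_k = min { 1 - sum_{j<k} t_j, z^{k-1}_i : u^k_i <> 0 }. *)
Definition chstep (R : realType) (W : finType)
    (st : R * (W -> R) * (W -> R)) (u : {set W}) : R * (W -> R) * (W -> R) :=
  let: (s, z, acc) := st in
  let t := \big[Num.min/(1 - s)]_(i in u) z i in
  (s + t, fun i => z i - t * ind R u i, fun i => acc i + t * ind R u i).

Definition Chhat (R : realType) (W : finType) (pref : rel {set W})
    (x : W -> R) : W -> R :=
  (foldl (@chstep R W) (0, x, (fun _ => 0)) (acceptable_sets pref)).2.

Definition cube (R : realType) (W : finType) : set (W -> R) :=
  [set x | forall i, 0 <= x i <= 1].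

(* Main.v *)
Require Import Defs.
From HB Require Import structures.
From mathcomp Require Import all_boot all_order all_algebra.
From mathcomp Require Import all_classical all_reals all_analysis.
Import numFieldNormedType.Exports.
Import Order.TTheory GRing.Theory Num.Theory.
Local Open Scope ring_scope.
Local Open Scope classical_set_scope.

Section Aux.
Variables (R : realType) (W : finType).

Definition tt_ (st : R * (W -> R) * (W -> R)) (u : {set W}) : R :=
  \big[Num.min/(1 - st.1.1)]_(i in u) st.1.2 i.

Lemma chstepE st u : chstep st u =
  (st.1.1 + tt_ st u, fun i => st.1.2 i - tt_ st u * ind R u i,
   fun i => st.2 i + tt_ st u * ind R u i).
Proof. by case: st => [[s z] acc]. Qed.

Lemma le_bigminP (c a : R) (I : Type) (r : seq I) (P : pred I) (f : I -> R) :
  (c <= \big[Num.min/a]_(i <- r | P i) f i) = (c <= a) && all (fun i => P i ==> (c <= f i)) r.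
Proof.
elim: r => [|j r IH]; first by rewrite big_nil andbT.
rewrite big_cons /=; case: (P j) => /=.
  by rewrite le_min IH; case: (c <= f j); case: (c <= a); case: all.
by rewrite IH.
Qed.

Lemma bigmin_le_a (a : R) (u : {set W}) (f : W -> R) :
  \big[Num.min/a]_(i in u) f i <= a.
Proof. by move: (lexx (\big[Num.min/a]_(i in u) f i)); rewrite le_bigminP => /andP[]. Qed.

Lemma bigmin_le_f (a : R) (u : {set W}) (f : W -> R) j : j \in u ->
  \big[Num.min/a]_(i in u) f i <= f j.
Proof.
move=> ju; move: (lexx (\big[Num.min/a]_(i in u) f i)).
rewrite le_bigminP => /andP[_ /allP /(_ j)].
by rewrite mem_index_enum ju /=; apply.
Qed.

Lemma bigmin_ge (c a : R) (u : {set W}) (f : W -> R) :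
  c <= a -> (forall j, j \in u -> c <= f j) -> c <= \big[Num.min/a]_(i in u) f i.
Proof.
move=> ca cf; rewrite le_bigminP ca /=; apply/allP => j _.
by apply/implyP => /cf.
Qed.

Lemma ind_in (u : {set W}) i : i \in u -> ind R u i = 1.
Proof. by rewrite /ind => ->. Qed.
Lemma ind_notin (u : {set W}) i : i \notin u -> ind R u i = 0.
Proof. by rewrite /ind => /negbTE ->. Qed.
Lemma ind_ge0 (u : {set W}) i : 0 <= ind R u i.
Proof. by rewrite /ind ler0n. Qed.

Lemma mono l : forall st, st.1.1 <= 1 -> (forall i, 0 <= st.1.2 i) ->
  forall i, st.2 i <= (foldl (@chstep R W) st l).2 i.
Proof.
elim: l => [|u l IH] st s1 z0 i /=; first by [].
have t0 : 0 <= tt_ st u.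
  by apply: bigmin_ge => [|j _]; [rewrite subr_ge0|].
apply: le_trans (IH _ _ _ i); rewrite chstepE /=.
- by rewrite lerDl mulr_ge0 // ind_ge0.
- by rewrite -lerBrDl; apply: bigmin_le_a.
- move=> j; case: (boolP (j \in u)) => ju.
    by rewrite ind_in // mulr1 subr_ge0; apply: bigmin_le_f.
  by rewrite ind_notin // mulr0 subr0.
Qed.

Lemma rp l : forall (s : R) z z' acc, s <= 1 -> (forall i, 0 <= z i) ->
  (forall i, z' i <= z i) ->
  (forall i, (foldl (@chstep R W) (s, z, acc) l).2 i <= acc i + z' i) ->
  (foldl (@chstep R W) (s, z', acc) l).2 = (foldl (@chstep R W) (s, z, acc) l).2.
Proof.
elim: l => [|u l IH] s z z' acc s1 z0 zz' H; first by [].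
have E : forall st, foldl (@chstep R W) st (u::l) = foldl (@chstep R W) (chstep st u) l by [].
rewrite !E !chstepE /=; move: H; rewrite E chstepE /= => H.
set t := tt_ (s, z, acc) u; set t' := tt_ (s, z', acc) u.
have tle1 : t <= 1 - s by apply: bigmin_le_a.
have tlez : forall j, j \in u -> t <= z j by move=> j; apply: bigmin_le_f.
have z0' : forall j, 0 <= z j - t * ind R u j.
  move=> j; case: (boolP (j \in u)) => ju.
    by rewrite ind_in // mulr1 subr_ge0; apply: tlez.
  by rewrite ind_notin // mulr0 subr0.
have s1' : s + t <= 1 by rewrite -lerBrDl.
have Ht : t' = t.
  apply/eqP; rewrite eq_le; apply/andP; split.
    apply: bigmin_ge; first exact: bigmin_le_a.
    move=> j ju /=; apply: (le_trans _ (zz' j)); rewrite /t' /tt_ /=; exact: bigmin_le_f.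
  rewrite /t' /tt_ /=; apply: bigmin_ge => // j ju.
  have := @mono l ((s + t, fun i => z i - t * ind R u i,
     fun i => acc i + t * ind R u i)) s1' z0' j.
  move: (H j); rewrite -/t => h1 h2; move: h2; rewrite /= ind_in // mulr1 => h2.
  by have := le_trans h2 h1; rewrite lerD2l.
rewrite Ht; apply: IH => //.
- by move=> j; rewrite lerD2r.
- move=> j; move: (H j); rewrite -/t.
  by rewrite addrACA subrr addr0.
Qed.

Lemma cont_bigmin (T : topologicalType) (I : Type) (r : seq I) (P : pred I)
  (a : T -> R) (f : I -> T -> R) : continuous a -> (forall i, continuous (f i)) ->
  continuous (fun x => \big[Num.min/a x]_(i <- r | P i) f i x).
Proof.
move=> ca cf; elim: r => [|j r IH].
  by under eq_fun do rewrite big_nil.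
under eq_fun do rewrite big_cons.
case: (P j) => //= x.
exact: (continuous_min (cf j x) (IH x)).
Qed.

Lemma cont_fold (T : topologicalType) l : forall S : T -> R * (W -> R) * (W -> R),
  continuous (fun x => (S x).1.1) -> (forall i, continuous (fun x => (S x).1.2 i)) ->
  (forall i, continuous (fun x => (S x).2 i)) ->
  forall i, continuous (fun x => (foldl (@chstep R W) (S x) l).2 i).
Proof.
elim: l => [|u l IH] S c1 c2 c3 //.
have Ht : continuous (fun x => tt_ (S x) u).
  apply: cont_bigmin => [x|i]; last exact: c2.
  apply: cvgB; [exact: cvg_cst | exact: c1].
apply: (IH (fun x => chstep (S x) u)).
- under eq_fun do rewrite chstepE /=.
  move=> x; apply: cvgD; [exact: c1 | exact: Ht].
- move=> i; under eq_fun do rewrite chstepE /=.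
  move=> x; apply: cvgB; first exact: c2.
  apply: cvgM; [exact: Ht | exact: cvg_cst].
- move=> i; under eq_fun do rewrite chstepE /=.
  move=> x; apply: cvgD; first exact: c3.
  apply: cvgM; [exact: Ht | exact: cvg_cst].
Qed.

End Aux.

Lemma ptws_cont (R : realType) (W : finType) (T : topologicalType) (g : T -> {ptws W -> R}) :
  (forall i, continuous (fun x => g x i)) -> continuous g.
Proof.
move=> cg x.
have := @cvg_sup (W -> R) W (fun i => Topological.class (initial_topology (fun f : W -> R => f i))) (g @ x) (g x) _.
move=> /= [_ H]; apply: H => i.
exact: (@continuous_comp_initial (W -> R) T R (fun f : W -> R => f i) g (cg i) x).
Qed.

Theorem lemma1 (R : realType) (W : finType) (pref : rel {set W}) :
  strict_pref pref ->
  {within (@cube R W : set {ptws W -> R}),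
     continuous (Chhat pref : {ptws W -> R} -> {ptws W -> R})} /\
  (forall x x' : W -> R, @cube R W x -> @cube R W x' ->
     (forall i, x' i <= x i) ->
     (forall i, Chhat pref x i <= x' i) ->
     Chhat pref x' = Chhat pref x).
Proof.
move=> _; split; last first.
  move=> x x' cx _ le H; rewrite /Chhat; apply: rp => //.
  - by move=> i; case/andP: (cx i).
  - by move=> i; rewrite add0r; apply: H.
apply: continuous_subspaceT; apply: ptws_cont => i.
have c1 : continuous (fun x : {ptws W -> R} => (0:R)) by exact: cst_continuous.
have c2 : forall j, continuous (fun x : {ptws W -> R} => x j).
  by move=> j; exact: (@proj_continuous W (fun _ => R) j).
have c3 : forall j : W, continuous (fun x : {ptws W -> R} => (0:R)) by move=> j; exact: cst_continuous.
exact: (@cont_fold R W {ptws W -> R} (acceptable_sets pref) (fun x => (0, x, fun _ => 0)) c1 c2 c3 i).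
Qed.
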